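(* Let $g\in\mathbb{Q}\setminus\{-1,0,1\}$ and $m=p_1^{e_1}\cdots p_r^{e_r}$. The set of integers $u\in S(g)$ with $\gcd(u,m)=1$ and $p_j^{e_j}\nmid\mathrm{ord}_g(u)$ for $1\le j\le r$ is completely multiplicative, i.e. for all natural numbers $x,y$: $xy$ lies in the set if and only if both $x$ and $y$ do.
   Context: $S(g)$ is the set of natural numbers all of whose prime factors $p$ satisfy $\nu_p(g)=0$; for $u\in S(g)$, $\mathrm{ord}_g(u)$ is the multiplicative order of $g$ modulo $u$. *)

(* Defs.v *)
From mathcomp Require Import all_boot all_order all_algebra.
From Stdlib Require Import ClassicalDescription.
Set Implicit Arguments. Unset Strict Implicit. Unset Printing Implicit Defensive.
Import Order.TTheory GRing.Theory Num.Theory.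
Local Open Scope ring_scope.

Definition nu_p_zero (g : rat) (p : nat) : bool :=
  ~~ (p %| `|numq g|)%N && ~~ (p %| `|denq g|)%N.

Definition inS (g : rat) (u : nat) : bool :=
  (0 < u)%N && all (nu_p_zero g) (primes u).

(* g^k = 1 mod u, i.e. u | numq(g)^k - denq(g)^k (denq g is invertible mod u
   when u is in S(g)). *)
Definition pow_is_one_mod (g : rat) (u k : nat) : bool :=
  ((u%:Z) %| (numq g) ^+ k - (denq g) ^+ k)%Z.

Definition ord_pred (g : rat) (u : nat) : pred nat :=
  fun k => (0 < k)%N && pow_is_one_mod g u k.

(* ord_g(u): the multiplicative order of g modulo u (least k >= 1 with
   g^k = 1 mod u); junk value 0 if no such k exists (never for u in S(g)). *)
Definition ordg (g : rat) (u : nat) : nat :=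
  match excluded_middle_informative (exists k, ord_pred g u k) with
  | left h => ex_minn h
  | right _ => 0%N
  end.

(* The set of u in S(g) with gcd(u,m)=1 and p^(nu_p(m)) not dividing ord_g(u)
   for every prime p | m (i.e. p_j^{e_j} for m = p_1^{e_1}...p_r^{e_r}). *)
Definition inA (g : rat) (m u : nat) : bool :=
  [&& inS g u, coprime u m &
      all (fun p => ~~ (p ^ logn p m %| ordg g u)%N) (primes m)].

(* Main.v *)
Require Import Defs.
From mathcomp Require Import all_boot all_order all_algebra.
From Stdlib Require Import ClassicalDescription.
Set Implicit Arguments. Unset Strict Implicit. Unset Printing Implicit Defensive.
Import Order.TTheory GRing.Theory Num.Theory.
Local Open Scope ring_scope.

Lemma powP0 g u : pow_is_one_mod g u 0.
Proof. by rewrite /pow_is_one_mod !expr0 subrr dvdz0. Qed.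

Lemma powP_add g u a b : pow_is_one_mod g u a -> pow_is_one_mod g u b ->
  pow_is_one_mod g u (a + b).
Proof.
rewrite /pow_is_one_mod => ha hb.
have ->: numq g ^+ (a + b) - denq g ^+ (a + b) =
  numq g ^+ a * (numq g ^+ b - denq g ^+ b) + (numq g ^+ a - denq g ^+ a) * denq g ^+ b.
  by rewrite !exprD mulrBr mulrBl addrA subrK.
by apply: rpredD; [apply: dvdz_mull | apply: dvdz_mulr].
Qed.

Lemma powP_mul g u a c : pow_is_one_mod g u a -> pow_is_one_mod g u (a * c).
Proof.
move=> ha; elim: c => [|c IH]; first by rewrite muln0 powP0.
by rewrite mulnS powP_add.
Qed.

Lemma powP_dvd g u v k : (u %| v)%N -> pow_is_one_mod g v k -> pow_is_one_mod g u k.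
Proof. by move=> uv; apply: dvdz_trans; rewrite dvdzE. Qed.

Lemma powP_cancel g u a b : coprime u `|denq g| ->
  pow_is_one_mod g u (a + b) -> pow_is_one_mod g u b -> pow_is_one_mod g u a.
Proof.
rewrite /pow_is_one_mod => cu hab hb.
have e: (numq g ^+ a - denq g ^+ a) * denq g ^+ b =
   (numq g ^+ (a + b) - denq g ^+ (a + b)) - numq g ^+ a * (numq g ^+ b - denq g ^+ b).
  by rewrite !exprD mulrBl mulrBr opprB [RHS]addrC addrA subrK.
have : ((u%:Z) %| (numq g ^+ a - denq g ^+ a) * denq g ^+ b)%Z.
  by rewrite e rpredB ?dvdz_mull.
rewrite Gauss_dvdzl //; apply: coprimezXr; by rewrite coprimezE.
Qed.

Lemma ordgP g u : (exists k, Defs.ord_pred g u k) ->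
  [/\ (0 < ordg g u)%N, pow_is_one_mod g u (ordg g u) &
      forall k, (0 < k)%N -> pow_is_one_mod g u k -> (ordg g u <= k)%N].
Proof.
move=> h; rewrite /ordg; case: excluded_middle_informative => [h'|//].
case: ex_minnP => o /andP[o0 Po] mn; split=> // k k0 Pk; apply: mn.
by rewrite /Defs.ord_pred k0 Pk.
Qed.

Lemma ordg_ex g u : (0 < ordg g u)%N -> exists k, Defs.ord_pred g u k.
Proof. by rewrite /ordg; case: excluded_middle_informative. Qed.

Lemma ordg_pos g u k : (0 < k)%N -> pow_is_one_mod g u k -> (0 < ordg g u)%N.
Proof.
move=> k0 Pk; have [] // := ordgP (ex_intro _ k _ : exists k, Defs.ord_pred g u k).
by rewrite /Defs.ord_pred k0 Pk.
Qed.

Lemma ordg_dvd g u k : coprime u `|denq g| -> (0 < ordg g u)%N ->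
  pow_is_one_mod g u k = (ordg g u %| k)%N.
Proof.
move=> cu o0; have [_ Po mn] := ordgP (ordg_ex o0).
apply/idP/idP.
- move=> Pk; rewrite /dvdn.
  have Pr : pow_is_one_mod g u (k %% ordg g u).
    apply: (@powP_cancel _ _ _ (k %/ ordg g u * ordg g u)) => //.
      by rewrite addnC -divn_eq.
    by rewrite mulnC powP_mul.
  apply/eqP; case: (posnP (k %% ordg g u)) => [//|r0].
  have := mn _ r0 Pr; by rewrite leqNgt ltn_pmod.
- by move/dvdnP=> [c ->]; rewrite mulnC powP_mul.
Qed.

Lemma inS_cop g u : inS g u -> coprime u `|denq g|.
Proof.
move/andP=> [u0 /allP H].
rewrite coprime_has_primes // ?absz_gt0 ?denq_neq0 //; apply/hasPn => p pd.
apply/negP => pu; have := H p pu; rewrite /nu_p_zero.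
by move: pd; rewrite mem_primes => /and3P[_ _ ->]; rewrite andbF.
Qed.

Lemma inS_mul g x y : (0 < x)%N -> (0 < y)%N -> inS g (x * y) = inS g x && inS g y.
Proof.
move=> x0 y0; rewrite /inS muln_gt0 x0 y0 /=.
apply/allP/andP => [H|[/allP Hx /allP Hy] p].
  by split; apply/allP => p pp; apply: H; rewrite primesM // pp ?orbT.
by rewrite primesM // => /orP[]; [apply: Hx|apply: Hy].
Qed.

Lemma keyG (a b : int) (k : nat) : ((k%:Z) %| a - b)%Z ->
  ((k%:Z) * (a - b) %| a ^+ k - b ^+ k)%Z.
Proof.
move=> hk; rewrite subrXX mulrC dvdz_mul //.
have ->: \sum_(i < k) a ^+ (k.-1 - i) * b ^+ i =
  \sum_(i < k) (a ^+ (k.-1 - i) - b ^+ (k.-1 - i)) * b ^+ i + \sum_(i < k) b ^+ k.-1.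
  rewrite -big_split /=; apply: eq_bigr => i _.
  rewrite mulrBl -exprD subnK ?subrK //; by rewrite -ltnS prednK // (leq_ltn_trans _ (ltn_ord i)).
apply: rpredD.
  apply: rpred_sum => i _; apply: dvdz_mulr; apply: dvdz_trans hk _.
  by rewrite subrXX dvdz_mulr.
rewrite sumr_const card_ord -mulr_natr.
apply: dvdz_mull; by rewrite pmulrn intz dvdzz.
Qed.

Lemma keyP g x y L : (0 < x)%N -> (0 < y)%N ->
  pow_is_one_mod g x L -> pow_is_one_mod g y L ->
  pow_is_one_mod g (x * y) (L * gcdn x y).
Proof.
rewrite /pow_is_one_mod => x0 y0 hx hy.
have hl : ((lcmn x y)%:Z %| numq g ^+ L - denq g ^+ L)%Z by rewrite dvdz_lcm hx hy.
have hD : ((gcdn x y)%:Z %| numq g ^+ L - denq g ^+ L)%Z.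
  apply: dvdz_trans hl; rewrite dvdzE /=.
  exact: dvdn_trans (dvdn_gcdl x y) (dvdn_lcml x y).
rewrite !exprM -muln_lcm_gcd PoszM mulrC.
apply: dvdz_trans (keyG hD); rewrite dvdz_mul2l //. have := gcdn_gt0 x y; rewrite x0; by case: (gcdn x y).
Qed.

Theorem lemma5 (g : rat) (m : nat) :
  g != 0 -> g != 1 -> g != -1 -> (0 < m)%N ->
  forall x y : nat, (0 < x)%N -> (0 < y)%N ->
    inA g m (x * y) = inA g m x && inA g m y.
Proof.
move=> _ _ _ m0 x y x0 y0.
rewrite /inA inS_mul // coprimeMl.
case Sx: (inS g x); case Sy: (inS g y); rewrite ?andbF //=.
case cx: (coprime x m); case cy: (coprime y m); rewrite ?andbF //=.
have Sxy : inS g (x * y) by rewrite inS_mul // Sx Sy.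
have hx := inS_cop Sx; have hy := inS_cop Sy; have hxy := inS_cop Sxy.
case E: (primes m) => [|p0 s]; first by [].
rewrite -E; have p0m : p0 \in primes m by rewrite E inE eqxx.
apply/idP/andP.
- move=> H.
  have oxy : (0 < ordg g (x * y))%N.
    rewrite lt0n; apply/negP => /eqP o0; have := allP H p0 p0m; by rewrite o0 dvdn0.
  have [_ Pxy _] := ordgP (ordg_ex oxy).
  have Px : pow_is_one_mod g x (ordg g (x * y)) by apply: powP_dvd Pxy; apply: dvdn_mulr.
  have Py : pow_is_one_mod g y (ordg g (x * y)) by apply: powP_dvd Pxy; apply: dvdn_mull.
  have ox := ordg_pos oxy Px; have oy := ordg_pos oxy Py.
  rewrite (ordg_dvd _ hx ox) in Px; rewrite (ordg_dvd _ hy oy) in Py.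
  split; apply/allP => p pm; apply: contra (allP H p pm) => h; exact: dvdn_trans h _.
- move=> [Hx Hy].
  have ox : (0 < ordg g x)%N.
    rewrite lt0n; apply/negP => /eqP o0; have := allP Hx p0 p0m; by rewrite o0 dvdn0.
  have oy : (0 < ordg g y)%N.
    rewrite lt0n; apply/negP => /eqP o0; have := allP Hy p0 p0m; by rewrite o0 dvdn0.
  set L := lcmn (ordg g x) (ordg g y).
  have Px : pow_is_one_mod g x L by rewrite (ordg_dvd _ hx ox) dvdn_lcml.
  have Py : pow_is_one_mod g y L by rewrite (ordg_dvd _ hy oy) dvdn_lcmr.
  have Pxy := keyP x0 y0 Px Py.
  have LD0 : (0 < L * gcdn x y)%N by rewrite muln_gt0 lcmn_gt0 ox oy gcdn_gt0 x0.
  have oxy := ordg_pos LD0 Pxy.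
  rewrite (ordg_dvd _ hxy oxy) in Pxy.
  apply/allP => p pm; apply/negP => hp.
  have pr : prime p by move: pm; rewrite mem_primes => /andP[].
  have pdm : (p %| m)%N by move: pm; rewrite mem_primes => /and3P[].
  have cpx : coprime p x by apply: coprime_dvdl pdm _; rewrite coprime_sym.
  have cpD : coprime (p ^ logn p m) (gcdn x y).
    by apply: coprimeXl; apply: coprime_dvdr cpx; apply: dvdn_gcdl.
  have := dvdn_trans hp Pxy; rewrite Gauss_dvdl //.
  rewrite !pfactor_dvdn ?lcmn_gt0 ?ox ?oy // logn_lcm // leq_max.
  have := allP Hx p pm; have := allP Hy p pm.
  by rewrite !pfactor_dvdn // => /negPf-> /negPf->.
Qed.
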